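(* Let $n$ be a positive integer and let $G$ be a pure $(2n+1)$-sparse gapset of genus $g=3n+2$ with multiplicity $m$. If $G$ is pseudo-symmetric, then $m=2n+1$.
   Context: A gapset is a finite set $G\subset\mathbb{N}=\{1,2,\dots\}$ such that whenever $z\in G$ and $z=x+y$ with $x,y\in\mathbb{N}$, then $x\in G$ or $y\in G$; its genus is $g=\#G$. Writing $G=\{\ell_1<\dots<\ell_g\}$, multiplicity $m(G)=\min\{s\in\mathbb{N}:s\notin G\}$, Frobenius number $F(G)=\ell_g$; $G$ is pseudo-symmetric if $F(G)=2g-2$. $G$ is pure $\kappa$-sparse if $\ell_{i+1}-\ell_i\le\kappa$ for all $i$ with equality for some $i$. *)

(* Defs.v *)
From mathcomp Require Import all_boot.
Set Implicit Arguments. Unset Strict Implicit. Unset Printing Implicit Defensive.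

(* A finite set of positive naturals is represented by a duplicate-free seq nat. *)
Definition is_gapset (G : seq nat) : Prop :=
  [/\ uniq G, (forall z, z \in G -> 0 < z) &
      (forall x y, 0 < x -> 0 < y -> x + y \in G -> (x \in G) || (y \in G))].

Definition genus (G : seq nat) : nat := size G.

Definition gaps_sorted (G : seq nat) : seq nat := sort leq G.

Definition frobenius (G : seq nat) : nat := \max_(z <- G) z.

Lemma exists_nongap (G : seq nat) : exists s, (0 < s) && (s \notin G).
Proof.
exists (\max_(z <- G) z).+1; apply/andP; split => //.
apply/negP => h.
have := @leq_bigmax_seq _ G xpredT (fun z => z) _ h isT.
by rewrite ltnn.
Qed.

Definition multiplicity (G : seq nat) : nat := ex_minn (exists_nongap G).

Definition pseudo_symmetric (G : seq nat) : Prop :=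
  frobenius G = 2 * genus G - 2.

Definition pure_sparse (kappa : nat) (G : seq nat) : Prop :=
  let s := gaps_sorted G in
  (forall i, i.+1 < size s -> nth 0 s i.+1 - nth 0 s i <= kappa) /\
  (exists i, i.+1 < size s /\ nth 0 s i.+1 - nth 0 s i = kappa).

(* Main.v *)
Require Import Defs.
From mathcomp Require Import all_boot zify.


Lemma gap_add (G : seq nat) (x y : nat) : is_gapset G -> 0 < x -> 0 < y -> x \notin G -> y \notin G -> x + y \notin G.
Proof.
case=> _ _ H x0 y0 xG yG; apply/negP=> /(H _ _ x0 y0).
by rewrite (negbTE xG) (negbTE yG).
Qed.

Lemma max_in (s : seq nat) : s != [::] -> \max_(z <- s) z \in s.
Proof.
elim: s => // x s IH _.
case: s IH => [|z s] IH; first by rewrite big_cons big_nil maxn0 inE eqxx.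
have h := IH isT.
rewrite big_cons inE.
set M := \max_(_ <- _) _ in h *.
case: (leqP x M) => hx.
  by rewrite h orbT.
by rewrite eqxx.
Qed.

Lemma no_double G F y : is_gapset G -> F \in G -> (forall z, z \in G -> z <= F) ->
  F = 2 * size G - 2 -> y \in G -> F - y \in G -> 0 < y < F -> y != F - y -> False.
Proof.
move=> gG FG Fmax FE yG FyG /andP[y0 yF] yneq.
have [uG posG _] := gG.
set t := iota 1 F.
set B := filter (mem G) t.
set A := filter (predC (mem G)) t.
have hAB : size B + size A = F.
  by rewrite !size_filter count_predC size_iota.
have hB : size B = size G.
  apply/perm_size/uniq_perm; first by rewrite filter_uniq // iota_uniq.
    done.
  move=> x; rewrite mem_filter mem_iota /=.
  case xG: (x \in G) => //=.
  have := posG _ xG; have := Fmax _ xG; lia.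
have memA a : a \in A -> [/\ a \notin G, 0 < a & a <= F].
  rewrite mem_filter mem_iota /= => /andP[-> ha]; split => //; lia.
set f := fun a => F - a.
have ufA : uniq (map f A).
  rewrite map_inj_in_uniq ?filter_uniq ?iota_uniq //.
  move=> a1 a2 /memA[_ h1 h1'] /memA[_ h2 h2']; rewrite /f; lia.
have nF : F \notin map f A.
    by apply/mapP => -[a /memA[_ a0 aF] e]; rewrite /f in e; lia.
have ny : y \notin map f A.
    apply/mapP => -[a /memA[aG a0 aF] e].
    have ea : a = F - y by rewrite /f in e; lia.
    by move: aG; rewrite ea FyG.
have nFy : F - y \notin map f A.
    apply/mapP => -[a /memA[aG a0 aF] e].
    have ea : a = y by rewrite /f in e; lia.
    by move: aG; rewrite ea yG.
have U : uniq (F :: y :: (F - y) :: map f A).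
  rewrite /= ufA !inE (negbTE nF) (negbTE ny) (negbTE nFy) !andbT !orbF yneq andbT.
  apply/negP; case/orP; move/eqP; lia.
have S : {subset F :: y :: (F - y) :: map f A <= B}.
  move=> x; rewrite !inE => /or3P[/eqP->|/eqP->|/orP[/eqP->|]].
  - rewrite mem_filter mem_iota /= FG /=; lia.
  - rewrite mem_filter mem_iota /= yG /=; lia.
  - rewrite mem_filter mem_iota /= FyG /=; lia.
  - move=> /mapP[a /memA[aG a0 aF] ->].
    have aF' : a < F by rewrite ltn_neqAle aF andbT; apply/eqP => e; move: aG; rewrite e FG.
    have hFa : 0 < F - a by lia.
    have : F - a \in G.
      apply/negPn/negP => h.
      by have := @gap_add G _ _ gG a0 hFa aG h; rewrite subnKC ?FG // ltnW.
    move=> hh; rewrite mem_filter mem_iota /= hh /=; rewrite /f; lia.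
have := uniq_leq_size U S; rewrite /= size_map => hh; change (@size nat B + @size nat A = F) in hAB; change (@size nat B = @size nat G) in hB; change (F = 2 * @size nat G - 2) in FE; change (is_true ((@size nat A).+3 <= @size nat B)) in hh; lia.
Qed.

Lemma sorted_facts (G : seq nat) : uniq G ->
  let s := sort leq G in
  (forall i j, i <= j -> j < size s -> nth 0 s i <= nth 0 s j) /\
  (forall i j, i < j -> j < size s -> nth 0 s i < nth 0 s j).
Proof.
move=> uG s.
have ss : sorted leq s by apply: sort_sorted; exact: leq_total.
have us : uniq s by rewrite sort_uniq.
have mono : forall i j, i <= j -> j < size s -> nth 0 s i <= nth 0 s j.
  move=> i j ij js; apply: (sorted_leq_nth leq_trans leqnn) => //.
  by rewrite inE; apply: leq_ltn_trans js.
split => // i j ij js.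
rewrite ltn_neqAle mono ?(ltnW ij) // andbT nth_uniq //; last by apply: ltn_trans js.
by rewrite neq_ltn ij.
Qed.

Theorem mainTheorem12 (n : nat) (G : seq nat) :
  0 < n -> is_gapset G -> pure_sparse (2 * n + 1) G ->
  genus G = 3 * n + 2 -> pseudo_symmetric G ->
  multiplicity G = 2 * n + 1.
Proof.
move=> n0 gG [sp1 [i [hi hi2]]] gE ps.
have [uG posG addG] := gG.
rewrite /multiplicity; case: ex_minnP => m /andP[m0 mG] mmin.
have lowG x : 0 < x -> x < m -> x \in G.
  move=> x0 xm; apply/negPn/negP => h.
  by have := mmin x; rewrite x0 h /= => /(_ isT); rewrite leqNgt xm.
move: sp1 hi hi2; rewrite /gaps_sorted.
have [mono strict] := @sorted_facts G uG.
set s := sort leq G in mono strict *.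
have sz : size s = 3 * n + 2 by rewrite size_sort.
have mems x : (x \in s) = (x \in G) by rewrite mem_sort.
move=> sp1 hi hi2.
rewrite /genus in gE.
rewrite /pseudo_symmetric /genus gE in ps.
set F := frobenius G in ps.
have FG : F \in G.
  apply: max_in; apply/eqP => e; move: gE; rewrite e /=; lia.
have Fmax z : z \in G -> z <= F.
  by move=> zG; exact: (@leq_bigmax_seq _ G xpredT (fun z => z) _ zG isT).
have lo : 2 * n + 1 <= m.
  rewrite leqNgt; apply/negP => mlt.
  set a := nth 0 s i in hi2; set b := nth 0 s i.+1 in hi2.
  have bG : b \in G by rewrite -mems mem_nth.
  have hc0 : 0 < b - m by lia.
  have cG : b - m \notin G.
    apply/negP => cG.
    have cs : b - m \in s by rewrite mems.
    have ix := index_mem (b - m) s; rewrite cs in ix.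
    have e := nth_index 0 cs.
    case: (leqP (index (b - m) s) i) => hj.
      have := mono _ _ hj (ltnW hi); rewrite e -/a; lia.
    have := mono _ _ hj ix; rewrite e -/b; lia.
  have := @gap_add G _ _ gG hc0 m0 cG mG; rewrite subnK ?bG //; lia.
suff : m <= 2 * n + 1 by lia.
rewrite leqNgt; apply/negP => mgt.
set a := nth 0 s (3 * n).
set b := nth 0 s (3 * n).+1.
have bG : b \in G by rewrite -mems mem_nth // sz; lia.
have aG : a \in G by rewrite -mems mem_nth // sz; lia.
have bF : b = F.
  apply/eqP; rewrite eqn_leq Fmax //=.
  have Fs : F \in s by rewrite mems.
  have ix := index_mem F s; rewrite Fs sz in ix.
  rewrite -(nth_index 0 Fs); apply: mono; rewrite ?sz; lia.
have ab : a < b by apply: strict; rewrite ?sz; lia.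
have hd := sp1 (3 * n) ltac:(rewrite sz; lia).
rewrite -/a -/b in hd.
have FaG : F - a \in G.
  apply: lowG; lia.
apply: (@no_double G F a gG FG Fmax _ aG FaG).
- rewrite gE; exact: ps.
- apply/andP; split; last by lia.
  exact: posG.
- apply/eqP; lia.
Qed.
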